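(* Let $\mathbb A$ be an abelian category with enough projective objects. Let $(f_0,f_1):a\to b$ be a morphism in $\mathbb A^{[1]}_c$ and let $g:\mathrm{Ker}(a)\to\mathrm{Ker}(b)$ and $h:\mathrm{Coker}(a)\to\mathrm{Coker}(b)$ be the induced morphisms. Then $(f_0,f_1)$ is fully cofaithful in $\mathbb A^{[1]}_c$ if and only if $h$ is an isomorphism and $g$ is an epimorphism in $\mathbb A$.
   Context: Let $\mathbb A$ be an abelian category. The 2-category $\mathbb A^{[1]}$ has as objects the morphisms $a:A_1\to A_0$ of $\mathbb A$. For objects $a:A_1\to A_0$ and $b:B_1\to B_0$, a morphism $a\to b$ is a pair $(f_0,f_1)$ of morphisms $f_i:A_i\to B_i$ of $\mathbb A$ with $b f_1=f_0 a$; composition is componentwise. A 2-arrow $(f_0,f_1)\Rightarrow(g_0,g_1)$ between morphisms $a\to b$ is a morphism $\alpha:A_0\to B_1$ of $\mathbb A$ with $f_1-g_1=\alpha a$ and $f_0-g_0=b\alpha$; vertical composition is addition of such $\alpha$'s, and whiskering is given by $(h_0,h_1)\circ\alpha=h_1\alpha$ and $\alpha\circ(e_0,e_1)=\alpha e_0$. All 2-arrows are invertible, so each $\mathbf{Hom}(a,b)$ is a groupoid. $\mathbb A^{[1]}_c$ is the full 2-subcategory of $\mathbb A^{[1]}$ on the objects $a:A_1\to A_0$ with $A_0$ projective in $\mathbb A$. A morphism $(f_0,f_1):a\to b$ induces $g:\mathrm{Ker}(a)\to\mathrm{Ker}(b)$ (restriction of $f_1$) and $h:\mathrm{Coker}(a)\to\mathrm{Coker}(b)$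 (induced by $f_0$). A morphism $f:a\to b$ of $\mathbb A^{[1]}_c$ is fully cofaithful in $\mathbb A^{[1]}_c$ if for every object $x$ of $\mathbb A^{[1]}_c$ the functor $-\circ f:\mathbf{Hom}(b,x)\to\mathbf{Hom}(a,x)$ is full and faithful. *)

(* Defs.v *)
From HB Require Import structures.
From mathcomp Require Import all_boot all_algebra.
Set Implicit Arguments. Unset Strict Implicit. Unset Printing Implicit Defensive.
Import GRing.Theory.
Local Open Scope ring_scope.

Record PreAddCat := {
  Ob :> Type;
  Mor : Ob -> Ob -> zmodType;
  mcomp : forall A B C : Ob, Mor B C -> Mor A B -> Mor A C;
  idm : forall A : Ob, Mor A A;
  compA : forall (A B C D : Ob) (h : Mor C D) (g : Mor B C) (f : Mor A B),
      mcomp h (mcomp g f) = mcomp (mcomp h g) f;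
  comp1m : forall (A B : Ob) (f : Mor A B), mcomp (idm B) f = f;
  compm1 : forall (A B : Ob) (f : Mor A B), mcomp f (idm A) = f;
  compDl : forall (A B C : Ob) (g g' : Mor B C) (f : Mor A B),
      mcomp (g + g') f = mcomp g f + mcomp g' f;
  compDr : forall (A B C : Ob) (g : Mor B C) (f f' : Mor A B),
      mcomp g (f + f') = mcomp g f + mcomp g f'
}.

Arguments Mor {p} _ _.
Arguments mcomp {p A B C}.
Arguments idm {p}.

Section Notions.
Variable C : PreAddCat.

Definition is_mono (A B : C) (f : Mor A B) : Prop :=
  forall (X : C) (u v : Mor X A), mcomp f u = mcomp f v -> u = v.

Definition is_epi (A B : C) (f : Mor A B) : Prop :=
  forall (X : C) (u v : Mor B X), mcomp u f = mcomp v f -> u = v.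

Definition is_iso (A B : C) (f : Mor A B) : Prop :=
  exists g : Mor B A, mcomp g f = idm A /\ mcomp f g = idm B.

Definition is_kernel (A B K : C) (f : Mor A B) (k : Mor K A) : Prop :=
  mcomp f k = 0 /\
  forall (X : C) (x : Mor X A), mcomp f x = 0 ->
    exists! u : Mor X K, mcomp k u = x.

Definition is_cokernel (A B Q : C) (f : Mor A B) (c : Mor B Q) : Prop :=
  mcomp c f = 0 /\
  forall (X : C) (x : Mor B X), mcomp x f = 0 ->
    exists! u : Mor Q X, mcomp u c = x.

Definition projective (P : C) : Prop :=
  forall (A B : C) (e : Mor A B) (x : Mor P B),
    is_epi e -> exists y : Mor P A, mcomp e y = x.

Definition abelian : Prop :=
  (exists Z : C, idm Z = 0) /\
  (forall A B : C, exists (S : C) (i1 : Mor A S) (i2 : Mor B S)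
                          (p1 : Mor S A) (p2 : Mor S B),
      [/\ mcomp p1 i1 = idm A, mcomp p2 i2 = idm B, mcomp p1 i2 = 0,
          mcomp p2 i1 = 0 & mcomp i1 p1 + mcomp i2 p2 = idm S]) /\
  (forall (A B : C) (f : Mor A B), exists (K : C) (k : Mor K A), is_kernel f k) /\
  (forall (A B : C) (f : Mor A B), exists (Q : C) (c : Mor B Q), is_cokernel f c) /\
  (forall (A B : C) (m : Mor A B), is_mono m ->
      exists (D : C) (f : Mor B D), is_kernel f m) /\
  (forall (A B : C) (e : Mor A B), is_epi e ->
      exists (D : C) (f : Mor D A), is_cokernel f e).

Definition enough_projectives : Prop :=
  forall A : C, exists (P : C) (e : Mor P A), projective P /\ is_epi e.

(* The 2-category A^[1]: objects are arrows a : A1 -> A0.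
   (f0, f1) : a -> b is a morphism iff b f1 = f0 a. *)
Definition arrow_mor (A1 A0 B1 B0 : C) (a : Mor A1 A0) (b : Mor B1 B0)
  (f0 : Mor A0 B0) (f1 : Mor A1 B1) : Prop :=
  mcomp b f1 = mcomp f0 a.

Definition two_arrow (A1 A0 B1 B0 : C) (a : Mor A1 A0) (b : Mor B1 B0)
  (f0 g0 : Mor A0 B0) (f1 g1 : Mor A1 B1) (alpha : Mor A0 B1) : Prop :=
  f1 - g1 = mcomp alpha a /\ f0 - g0 = mcomp b alpha.

(* For a morphism f = (f0,f1) : a -> b, and x : X1 -> X0, the functor
   - o f : Mor(b,x) -> Mor(a,x) sends (k0,k1) to (k0 f0, k1 f1) and a
   2-arrow alpha to alpha f0. *)
Definition precomp_full (A1 A0 B1 B0 X1 X0 : C) (a : Mor A1 A0) (b : Mor B1 B0)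
  (x : Mor X1 X0) (f0 : Mor A0 B0) (f1 : Mor A1 B1) : Prop :=
  forall (k0 l0 : Mor B0 X0) (k1 l1 : Mor B1 X1),
    arrow_mor b x k0 k1 -> arrow_mor b x l0 l1 ->
    forall beta : Mor A0 X1,
      two_arrow a x (mcomp k0 f0) (mcomp l0 f0) (mcomp k1 f1) (mcomp l1 f1) beta ->
      exists alpha : Mor B0 X1,
        two_arrow b x k0 l0 k1 l1 alpha /\ mcomp alpha f0 = beta.

Definition precomp_faithful (A1 A0 B1 B0 X1 X0 : C) (a : Mor A1 A0) (b : Mor B1 B0)
  (x : Mor X1 X0) (f0 : Mor A0 B0) (f1 : Mor A1 B1) : Prop :=
  forall (k0 l0 : Mor B0 X0) (k1 l1 : Mor B1 X1),
    arrow_mor b x k0 k1 -> arrow_mor b x l0 l1 ->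
    forall alpha alpha' : Mor B0 X1,
      two_arrow b x k0 l0 k1 l1 alpha -> two_arrow b x k0 l0 k1 l1 alpha' ->
      mcomp alpha f0 = mcomp alpha' f0 -> alpha = alpha'.

(* (f0,f1) : a -> b is fully cofaithful in A^[1]_c: for every object
   x : X1 -> X0 of A^[1]_c (i.e. X0 projective), - o f is full and faithful. *)
Definition fully_cofaithful_c (A1 A0 B1 B0 : C) (a : Mor A1 A0) (b : Mor B1 B0)
  (f0 : Mor A0 B0) (f1 : Mor A1 B1) : Prop :=
  forall (X1 X0 : C) (x : Mor X1 X0), projective X0 ->
    precomp_full a b x f0 f1 /\ precomp_faithful a b x f0 f1.

End Notions.

(* Main.v *)
Require Import Defs.
From HB Require Import structures.
From mathcomp Require Import all_boot all_algebra.
Set Implicit Arguments. Unset Strict Implicit. Unset Printing Implicit Defensive.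
Import GRing.Theory.
Local Open Scope ring_scope.

Section Helpers.
Variable C : PreAddCat.
Local Notation "g ⊙ f" := (mcomp g f) (at level 40, left associativity).

Lemma cA (A B C' D : C) (h : Mor C' D) (g : Mor B C') (f : Mor A B) :
  h ⊙ (g ⊙ f) = (h ⊙ g) ⊙ f.
Proof. exact: (Defs.compA h g f). Qed.
Lemma c1l (A B : C) (f : Mor A B) : idm B ⊙ f = f. Proof. exact: (@comp1m C A B f). Qed.
Lemma c1r (A B : C) (f : Mor A B) : f ⊙ idm A = f. Proof. exact: (@compm1 C A B f). Qed.
Lemma cDl (A B C' : C) (g g' : Mor B C') (f : Mor A B) : (g + g') ⊙ f = g ⊙ f + g' ⊙ f.
Proof. exact: (@compDl C A B C' g g' f). Qed.
Lemma cDr (A B C' : C) (g : Mor B C') (f f' : Mor A B) : g ⊙ (f + f') = g ⊙ f + g ⊙ f'.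
Proof. exact: (@compDr C A B C' g f f'). Qed.
Lemma c0l (A B C' : C) (f : Mor A B) : (0 : Mor B C') ⊙ f = 0.
Proof. by apply: (@addrI _ ((0 : Mor B C') ⊙ f)); rewrite -cDl !addr0. Qed.
Lemma c0r (A B C' : C) (g : Mor B C') : g ⊙ (0 : Mor A B) = 0.
Proof. by apply: (@addrI _ (g ⊙ (0 : Mor A B))); rewrite -cDr !addr0. Qed.
Lemma cNl (A B C' : C) (g : Mor B C') (f : Mor A B) : (- g) ⊙ f = - (g ⊙ f).
Proof. by apply: (@addrI _ (g ⊙ f)); rewrite -cDl !subrr c0l. Qed.
Lemma cNr (A B C' : C) (g : Mor B C') (f : Mor A B) : g ⊙ (- f) = - (g ⊙ f).
Proof. by apply: (@addrI _ (g ⊙ f)); rewrite -cDr !subrr c0r. Qed.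
Lemma cBl (A B C' : C) (g g' : Mor B C') (f : Mor A B) : (g - g') ⊙ f = g ⊙ f - g' ⊙ f.
Proof. by rewrite cDl cNl. Qed.
Lemma cBr (A B C' : C) (g : Mor B C') (f f' : Mor A B) : g ⊙ (f - f') = g ⊙ f - g ⊙ f'.
Proof. by rewrite cDr cNr. Qed.

Lemma kernel_mono (A B K : C) (f : Mor A B) (k : Mor K A) :
  is_kernel f k -> is_mono k.
Proof.
move=> [H0 H] X u v E.
have fx : f ⊙ (k ⊙ u) = 0 by rewrite cA H0 c0l.
have [u0 [_ Hu]] := H X _ fx.
by rewrite -(Hu u erefl) (Hu v (esym E)).
Qed.

Lemma coker_epi (A B Q : C) (f : Mor A B) (c : Mor B Q) :
  is_cokernel f c -> is_epi c.
Proof.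
move=> [H0 H] X u v E.
have fx : (u ⊙ c) ⊙ f = 0 by rewrite -cA H0 c0r.
have [u0 [_ Hu]] := H X _ fx.
by rewrite -(Hu u erefl) (Hu v (esym E)).
Qed.

Lemma mono_comp (A B D : C) (f : Mor A B) (g : Mor B D) :
  is_mono g -> is_mono f -> is_mono (g ⊙ f).
Proof. move=> hg hf X u v E; apply: hf; apply: hg; by rewrite !cA. Qed.

Lemma zero_out (Z X : C) : idm Z = 0 -> forall x : Mor X Z, x = 0.
Proof. by move=> HZ x; rewrite -[x]c1l HZ c0l. Qed.

Lemma zero_proj (Z : C) : idm Z = 0 -> projective Z.
Proof.
move=> HZ A B e x _; exists 0.
by rewrite c0r -[x]c1r HZ c0r.
Qed.

Lemma exact_lift (HC : abelian C) (A B Q : C) (f : Mor A B) (c : Mor B Q)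
  (hc : is_cokernel f c) (P : C) (pP : projective P) (v : Mor P B) :
  c ⊙ v = 0 -> exists w, f ⊙ w = v.
Proof.
move=> Hcv.
case: HC => _ [_ [Hker [_ [Hmono _]]]].
have [I [i hi]] := Hker _ _ c.
have [q [hq _]] := hi.2 _ f hc.1.
have qepi : is_epi q.
  move=> Y r1 r2 E; apply/eqP; rewrite -subr_eq0; apply/eqP.
  have rq0 : (r1 - r2) ⊙ q = 0 by rewrite cBl E subrr.
  have [J [m hm]] := Hker _ _ (r1 - r2).
  have [q' [hq' _]] := hm.2 _ q rq0.
  have imono : is_mono (i ⊙ m) := mono_comp (kernel_mono hi) (kernel_mono hm).
  have [D [phi hphi]] := Hmono _ _ _ imono.
  have phif : phi ⊙ f = 0.
    have -> : phi ⊙ f = (phi ⊙ (i ⊙ m)) ⊙ q' by rewrite -hq -hq' !cA.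
    by rewrite hphi.1 c0l.
  have [psi [hpsi _]] := hc.2 _ phi phif.
  have phii : phi ⊙ i = 0 by rewrite -hpsi -cA hi.1 c0r.
  have [s [hs _]] := hphi.2 _ i phii.
  have ms : m ⊙ s = idm I.
    by apply: (kernel_mono hi); rewrite cA hs c1r.
  by rewrite -[r1 - r2]c1r -ms cA hm.1 c0l.
have [t [ht _]] := hi.2 _ v Hcv.
have [w hw] := pP _ _ q t qepi.
by exists w; rewrite -hq -cA hw ht.
Qed.

End Helpers.

Local Notation "g ⊙ f" := (mcomp g f) (at level 40, left associativity).
Unset Implicit Arguments.

Theorem lemma3p4 (C : PreAddCat) (HC : abelian C) (HP : enough_projectives C)
  (A1 A0 B1 B0 : C) (a : Mor A1 A0) (b : Mor B1 B0)
  (pA : projective A0) (pB : projective B0)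
  (f0 : Mor A0 B0) (f1 : Mor A1 B1) (hf : arrow_mor a b f0 f1)
  (KA KB : C) (ka : Mor KA A1) (kb : Mor KB B1)
  (hka : is_kernel a ka) (hkb : is_kernel b kb)
  (g : Mor KA KB) (hg : mcomp kb g = mcomp f1 ka)
  (QA QB : C) (ca : Mor A0 QA) (cb : Mor B0 QB)
  (hca : is_cokernel a ca) (hcb : is_cokernel b cb)
  (h : Mor QA QB) (hh : mcomp h ca = mcomp cb f0) :
  fully_cofaithful_c a b f0 f1 <-> is_iso h /\ is_epi g.
Proof.
have HC' := HC.
case: HC' => [[Z HZ] [Hbi [Hker [Hcok [Hmono Hepi]]]]].
have pZ : projective Z := zero_proj HZ.
split.
- move=> HF.
  have [al Hal] : exists al : Mor QB QA, al ⊙ h = idm QA.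
    have [Hfull _] := HF QA Z 0 pZ.
    have [alpha [[Ha1 Ha2] Ha3]] : exists alpha : Mor B0 QA,
        two_arrow b (0 : Mor QA Z) 0 0 0 0 alpha /\ alpha ⊙ f0 = ca.
      apply: (Hfull 0 0 0 0).
      + by rewrite /arrow_mor ?c0l ?c0r.
      + by rewrite /arrow_mor ?c0l ?c0r.
      + by split; rewrite !c0l subrr ?hca.1.
    rewrite subrr in Ha1.
    have [al [hal _]] := hcb.2 _ alpha (esym Ha1).
    exists al; apply: (coker_epi hca).
    by rewrite -cA hh cA hal Ha3 c1l.
  have hepi : is_epi h.
    move=> Y u v E.
    have [_ Hfa] := HF Y Z 0 pZ.
    apply: (coker_epi hcb).
    apply: (Hfa 0 0 0 0 _ _ (u ⊙ cb) (v ⊙ cb)).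
    + by rewrite /arrow_mor ?c0l ?c0r.
    + by rewrite /arrow_mor ?c0l ?c0r.
    + by split; rewrite subrr ?c0l // -cA hcb.1 c0r.
    + by split; rewrite subrr ?c0l // -cA hcb.1 c0r.
    + by rewrite -!cA -hh !cA E.
  split.
    exists al; split => //.
    by apply: hepi; rewrite -cA Hal c1r c1l.
  have [S [i1 [i2 [p1 [p2 [P1 P2 P3 P4 P5]]]]]] := Hbi B1 A0.
  have [X1 [c hc]] := Hcok _ _ (i1 ⊙ f1 - i2 ⊙ a).
  have [Hfull _] := HF X1 Z 0 pZ.
  have E : c ⊙ i1 ⊙ f1 = c ⊙ i2 ⊙ a.
    by apply/eqP; rewrite -subr_eq0 -!cA -cBr hc.1.
  have [alpha [[Ha1 _] _]] : exists alpha : Mor B0 X1,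
      two_arrow b (0 : Mor X1 Z) 0 0 (c ⊙ i1) 0 alpha /\ alpha ⊙ f0 = c ⊙ i2.
    apply: (Hfull 0 0 (c ⊙ i1) 0).
    + by rewrite /arrow_mor ?c0l ?c0r.
    + by rewrite /arrow_mor ?c0l ?c0r.
    + by split; rewrite !c0l ?subr0 ?subrr.
  rewrite subr0 in Ha1.
  have [P [p [pP pe]]] := HP KB.
  have cv : c ⊙ (i1 ⊙ kb ⊙ p) = 0.
    by rewrite !cA Ha1 -(cA alpha) hkb.1 c0r c0l.
  have [w hw] := exact_lift HC hc pP cv.
  have Hp1 : p1 ⊙ (i1 ⊙ f1 - i2 ⊙ a) = f1 by rewrite cBr !cA P1 P3 c1l c0l subr0.
  have Hp2 : p2 ⊙ (i1 ⊙ f1 - i2 ⊙ a) = - a by rewrite cBr !cA P4 P2 c1l c0l sub0r.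
  have e1 := congr1 (mcomp p1) hw.
  rewrite cA Hp1 !cA P1 c1l in e1.
  have e2 := congr1 (mcomp p2) hw.
  rewrite cA Hp2 !cA P4 !c0l cNl in e2.
  have aw : a ⊙ w = 0 by apply/eqP; rewrite -oppr_eq0 e2.
  have [w' [hw' _]] := hka.2 _ w aw.
  have Hpg : p = g ⊙ w'.
    by apply: (kernel_mono hkb); rewrite cA hg -cA hw' e1.
  move=> Y u v Euv; apply: pe.
  by rewrite Hpg !cA Euv.
- case=> [[hinv [Hi1 Hi2]] gepi].
  have hmono : is_mono h.
    move=> X u v E.
    by rewrite -[u]c1l -Hi1 -cA E cA Hi1 c1l.
  have JE : forall Y (d : Mor B0 Y), d ⊙ b = 0 -> d ⊙ f0 = 0 -> d = 0.
    move=> Y d db df.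
    have [d' [hd' _]] := hcb.2 _ d db.
    have d'h : d' ⊙ h = 0.
      apply: (coker_epi hca).
      by rewrite -cA hh cA hd' df c0l.
    by rewrite -hd' -[d']c1r -Hi2 cA d'h !c0l.
  move=> X1 X0 x pX0; split.
  + move=> k0 l0 k1 l1 Hk Hl be [Hb1 Hb2].
    have [m1 m1E] : exists m1, m1 = k1 - l1 by exists (k1 - l1).
    have [S [i1 [i2 [p1 [p2 [P1 P2 P3 P4 P5]]]]]] := Hbi B1 A0.
    have [d dE] : exists d, d = b ⊙ p1 + f0 ⊙ p2 by exists (b ⊙ p1 + f0 ⊙ p2).
    have [phi phiE] : exists phi, phi = m1 ⊙ p1 + be ⊙ p2
      by exists (m1 ⊙ p1 + be ⊙ p2).
    have Hd1 : d ⊙ i1 = b by rewrite dE cDl -!cA P1 P4 c1r c0r addr0.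
    have Hd2 : d ⊙ i2 = f0 by rewrite dE cDl -!cA P3 P2 c0r c1r add0r.
    have depi : is_epi d.
      move=> Y u v E; apply/eqP; rewrite -subr_eq0; apply/eqP; apply: JE.
      * by rewrite -Hd1 cA cBl E subrr c0l.
      * by rewrite -Hd2 cA cBl E subrr c0l.
    have [D [fD hfD]] := Hepi _ _ d depi.
    have M : m1 ⊙ f1 = be ⊙ a by rewrite m1E cBl Hb1.
    have key : forall P (pP : projective P) (u : Mor P B1) (v : Mor P A0),
        b ⊙ u + f0 ⊙ v = 0 -> m1 ⊙ u + be ⊙ v = 0.
      move=> P pP u v E.
      have Ev : f0 ⊙ v = - (b ⊙ u) by apply/eqP; rewrite -addr_eq0 addrC E.
      have cav : ca ⊙ v = 0.
        apply: hmono; rewrite c0r cA hh -cA Ev cNr cA hcb.1 c0l oppr0 //.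
      have [w hw] := exact_lift HC hca pP cav.
      have bz : b ⊙ (u + f1 ⊙ w) = 0 by rewrite cDr cA hf -cA hw E.
      have [z [hz _]] := hkb.2 _ _ bz.
      have [z' hz'] := pP _ _ g z gepi.
      have Eu : u = kb ⊙ z - f1 ⊙ w by rewrite hz addrK.
      rewrite Eu -hw cBr -hz' (cA kb) hg !cA M.
      by rewrite -(cA be a ka) hka.1 c0r c0l sub0r addNr.
    have phif : phi ⊙ fD = 0.
      have [P [e [pP pe]]] := HP D.
      apply: pe; rewrite c0l.
      have := key P pP (p1 ⊙ fD ⊙ e) (p2 ⊙ fD ⊙ e).
      rewrite !cA phiE !cDl; apply.
      by rewrite -!cDl -dE hfD.1 c0l.
    have [al [hal _]] := hfD.2 _ phi phif.
    exists al; split; [split|].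
    * by rewrite -m1E -Hd1 cA hal phiE cDl -!cA P1 P4 c1r c0r addr0.
    * apply: depi.
      rewrite -cA hal phiE cDr !cA.
      have -> : x ⊙ m1 = (k0 - l0) ⊙ b by rewrite m1E cBr Hk Hl cBl.
      by rewrite -Hb2 -cBl -!cA -cDr -dE.
    * by rewrite -Hd2 cA hal phiE cDl -!cA P3 P2 c0r c1r add0r.
  + move=> k0 l0 k1 l1 _ _ al al' [A1' A2'] [B1' B2'] E.
    apply/eqP; rewrite -subr_eq0; apply/eqP; apply: JE.
    * by rewrite cBl -A1' -B1' subrr.
    * by rewrite cBl E subrr.
Qed.
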